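(* Let $m\ge2$. The polynomial $G_m(t,\beta)$ (in the variable $t$) satisfies: (i) for $0<\beta<1$ all zeros of $G_m(t,\beta)$ are simple and negative; (ii) for $0<\beta<\frac12$, $G_m(t,\beta)$ has exactly $\lfloor\frac m2\rfloor$ zeros in $|t|<1$ and $\lfloor\frac{m-1}2\rfloor$ zeros in $|t|>1$; (iii) for $\frac12<\beta<1$, $G_m(t,\beta)$ has exactly $\lfloor\frac{m-1}2\rfloor$ zeros in $|t|<1$ and $\lfloor\frac m2\rfloor$ zeros in $|t|>1$.
   Context: $G_1(t,\beta)=-1$ and for $m\ge2$, $G_m(t,\beta)=[\beta(t-1)-(m-1)t]G_{m-1}(t,\beta)+t(t-1)\frac{\partial}{\partial t}G_{m-1}(t,\beta)$; $G_m$ is a polynomial of degree at most $m-1$ in $t$. *)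

(* Defs.v *)
From HB Require Import structures.
From mathcomp Require Import all_boot all_order all_algebra.
From mathcomp Require Import reals.
From mathcomp Require Import complex.
Set Implicit Arguments. Unset Strict Implicit. Unset Printing Implicit Defensive.
Import Order.TTheory GRing.Theory Num.Theory.
Local Open Scope ring_scope.

(* Gaux b n = G_{n+1}(t, b) as a polynomial in t:
   G_1 = -1,
   G_m = [b(t-1) - (m-1) t] G_{m-1} + t(t-1) d/dt G_{m-1}. *)
Fixpoint Gaux (R : realType) (b : R) (n : nat) : {poly R} :=
  match n with
  | 0 => -1
  | n'.+1 =>
      (b *: ('X - 1) - (n'.+1)%:R *: 'X) * Gaux b n'
      + ('X * ('X - 1)) * (Gaux b n')^`()
  end.

(* G_m(t, b) for m >= 1 (the value at m = 0 is irrelevant). *)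
Definition G (R : realType) (m : nat) (b : R) : {poly R} := Gaux b m.-1.

Definition GC (R : realType) (m : nat) (b : R) : {poly R[i]} :=
  map_poly (real_complex R) (G m b).

Definition nzeros (C : fieldType) (p : {poly C}) (P : C -> bool) (k : nat) : Prop :=
  exists s : seq C, [/\ uniq s, forall z, (z \in s) = (root p z && P z) & size s = k].

(* Main.v *)
Require Import Defs.
From HB Require Import structures.
From mathcomp Require Import all_boot all_order all_algebra.
From mathcomp Require Import reals.
From mathcomp Require Import complex polyrcf.
From mathcomp Require Import ring lra zify.
Import Order.TTheory GRing.Theory Num.Theory.
Set Implicit Arguments. Unset Strict Implicit. Unset Printing Implicit Defensive.
Local Open Scope ring_scope.
Section GAdef.
Variable A : comNzRingType.
Fixpoint GA (b : A) (n : nat) : {poly A} :=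
  match n with
  | 0 => -1
  | n'.+1 =>
      (b *: ('X - 1) - (n'.+1)%:R *: 'X) * GA b n'
      + ('X * ('X - 1)) * (GA b n')^`()
  end.
End GAdef.

Section S.
Variable R : realType.

Lemma Gaux_GA (b : R) n : Gaux b n = GA b n.
Proof. by elim: n => //= n ->. Qed.

Lemma GA_map (b : R) n :
  map_poly (horner_eval b) (GA ('X : {poly R}) n) = GA b n.
Proof.
elim: n => [|n IH] /=; first by rewrite rmorphN rmorph1.
rewrite rmorphD !rmorphM /= -deriv_map IH.
rewrite rmorphB /= !map_polyZ /= rmorphB /= map_polyX rmorph1.
by rewrite horner_evalE hornerX rmorph_nat.
Qed.

Definition Apol (n : nat) : {poly R} := (GA ('X : {poly R}) n).[-1].

Lemma ApolE (b : R) n : (Apol n).[b] = (Gaux b n).[-1].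
Proof.
rewrite Gaux_GA -GA_map /Apol.
have -> : (-1 : R) = horner_eval b (-1) by rewrite rmorphN rmorph1.
by rewrite horner_map.
Qed.
Lemma GauxS (b : R) n : Gaux b n.+1 =
  ((b - n.+1%:R)%:P * 'X - b%:P) * Gaux b n + ('X * ('X - 1)) * (Gaux b n)^`().
Proof.
rewrite /=; congr (_ * _ + _).
rewrite -!mul_polyC polyCB; ring.
Qed.

Lemma Gshift (b : R) n :
  'X * Gaux (b + 1) n = Gaux b n - ('X - 1) ^+ n.+1 * (b ^+ n)%:P.
Proof.
elim: n => [|n IH].
  by rewrite /= expr0 expr1 polyC1 mulr1; ring.
have E : Gaux b n = 'X * Gaux (b + 1) n + ('X - 1) ^+ n.+1 * (b ^+ n)%:P.
  by rewrite IH; ring.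
rewrite !GauxS E.
set g := Gaux (b + 1) n.
rewrite derivD !derivM derivX derivC mulr0 addr0.
rewrite deriv_exp derivB derivX derivC subr0 mul1r.
rewrite !polyCB !polyCD !rmorphXn /=.
rewrite -!natr1 !polyCD !polyC1 /=.
have hn : (n%:R)%:P = n%:R :> {poly R} by rewrite rmorph_nat.
rewrite hn -[_ *+ n.+1]mulr_natr -natr1 !mul1r.
move: (g^`()) => h. rewrite !exprS. move: (_ ^+ n) (_ ^+ n) => e d. ring.
Qed.
End S.



Section S3.
Variable R : realType.
Notation A := (@Apol R).

Lemma Ashift n (b : R) : (A n).[b] + (A n).[b + 1] = (-2) ^+ n.+1 * b ^+ n.
Proof.
rewrite !ApolE.
have := congr1 (fun p => p.[-1]) (Gshift b n) => /=.
rewrite hornerM hornerX hornerD hornerN hornerM hornerC.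
rewrite horner_exp hornerD hornerX hornerN hornerC.
have -> : (-1 - 1 : R) = -2 by ring.
move: ((-2 : R) ^+ n.+1) => e h.
by rewrite -[LHS]addr0 -(subrr ((Gaux (b+1) n).[-1])); lra.
Qed.

Lemma poly_eq0_nat (p : {poly R}) (d : R) : d != 0 ->
  (forall k : nat, p.[k%:R * d] = 0) -> p = 0.
Proof.
move=> d0 h; apply: (@roots_geq_poly_eq0 _ p [seq k%:R * d | k <- iota 0 (size p)]).
- by apply/allP => x /mapP [k _ ->]; rewrite /root h.
- rewrite map_inj_uniq ?iota_uniq // => i j /(mulIf d0)/eqP.
  by rewrite eqr_nat => /eqP.
- by rewrite size_map size_iota.
Qed.

Lemma poly_ext (p q : {poly R}) : (forall x, p.[x] = q.[x]) -> p = q.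
Proof.
move=> h; apply/eqP; rewrite -subr_eq0; apply/eqP.
apply: (@poly_eq0_nat _ 1); first exact: oner_neq0. move=> k.
by rewrite hornerD hornerN h subrr.
Qed.

Lemma anti_uniq (f : {poly R}) : (forall x, f.[x] + f.[x + 1] = 0) -> f = 0.
Proof.
move=> h.
have per x : f.[x + 2] = f.[x].
  have h1 := h x; have h2 := h (x + 1).
  have -> : x + 2 = x + 1 + 1 by ring.
  lra.
have g0 : f - (f.[0])%:P = 0.
  apply: (@poly_eq0_nat _ 2); first by rewrite pnatr_eq0. move=> k.
  rewrite hornerD hornerN hornerC.
  elim: k => [|k IH]; first by rewrite mul0r subrr.
  by rewrite -natr1 mulrDl mul1r per.
have fE : f = (f.[0])%:P by apply/eqP; rewrite -subr_eq0 g0.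
move: fE h; set c := f.[0] => fE h.
have := h 0; rewrite fE !hornerC => e.
have -> : c = 0 by lra.
by rewrite polyC0.
Qed.

Lemma Ashift_poly n :
  A n + (A n \Po ('X + 1)) = ((-2) ^+ n.+1)%:P * 'X ^+ n.
Proof.
apply: poly_ext => x.
by rewrite hornerD horner_comp hornerD hornerX hornerC hornerM hornerC
  horner_exp hornerX Ashift.
Qed.

Lemma Aderiv n : (A n.+1)^`() = ((-2) * n.+1%:R)%:P * A n.
Proof.
apply/eqP; rewrite -subr_eq0; apply/eqP; apply: anti_uniq => x.
have := congr1 (fun p => p.[x]) (congr1 deriv (Ashift_poly n.+1)) => /=.
rewrite derivD deriv_comp derivD derivX derivC addr0 mulr1.
rewrite derivM derivC mul0r add0r derivXn.
rewrite hornerD horner_comp hornerD hornerX hornerC.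
rewrite hornerM hornerC hornerMn horner_exp hornerX => h.
have hs := Ashift n x.
rewrite !hornerD !hornerN !hornerM !hornerC.
set c := (-2 * n.+1%:R : R).
transitivity (((A n.+1)^`().[x] + (A n.+1)^`().[x + 1]) - c * ((A n).[x] + (A n).[x + 1])).
  by ring.
rewrite h hs /c exprS -mulr_natr.
move: ((-2 : R) ^+ n.+1) (x ^+ n) => e y; ring.
Qed.

Lemma Arefl n (x : R) : (A n).[1 - x] = (-1) ^+ n * (A n).[x].
Proof.
pose f := (A n \Po (1 - 'X)) - ((-1) ^+ n)%:P * A n.
have f0 : f = 0.
  apply: anti_uniq => y.
  rewrite /f !hornerD !hornerN !hornerM !hornerC !horner_comp !hornerD !hornerN
    !hornerX !hornerC.
  have h1 := Ashift n (- y).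
  have h2 := Ashift n y.
  have -> : 1 - (y + 1) = - y by ring.
  have -> : 1 - y = - y + 1 by ring.
  transitivity (((A n).[- y] + (A n).[- y + 1]) - (-1) ^+ n * ((A n).[y] + (A n).[y + 1])).
    by ring.
  rewrite h1 h2 [(- y) ^+ n]exprNn.
  move: ((-2 : R) ^+ n.+1) ((-1 : R) ^+ n) (y ^+ n) => e s t; ring.
have := congr1 (fun p => p.[x]) f0.
rewrite /f hornerD hornerN hornerM hornerC horner_comp hornerD hornerN hornerX
  hornerC horner0.
by move/eqP; rewrite subr_eq0 => /eqP.
Qed.

Lemma A0 : A 0 = -1.
Proof. by rewrite /Apol /= hornerN hornerC. Qed.

Lemma Aeven0 n : ~~ odd n -> (0 < n)%N -> (A n).[0] = 0.
Proof.
move=> ev n0.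
have h := Ashift n 0.
have r := Arefl n 0.
rewrite subr0 -signr_odd (negbTE ev) expr0 mul1r in r.
rewrite add0r r expr0n (gtn_eqF n0) mulr0 in h.
lra.
Qed.

Lemma Aodd_half n : odd n -> (A n).[2^-1] = 0.
Proof.
move=> od.
have r := Arefl n (2^-1).
have e : (1 - 2^-1 : R) = 2^-1 by field.
rewrite e in r.
rewrite -signr_odd od expr1 in r.
lra.
Qed.


Lemma Asign n (x : R) : 0 < x < 2^-1 -> 0 < (-1) ^+ (n./2).+1 * (A n).[x].
Proof.
elim: n x => [|n IH] x /andP [x0 x1].
  by rewrite A0 hornerN hornerC /= expr1 mulN1r opprK ltr01.
have hn : (0 : R) < n.+1%:R by rewrite ltr0n.
case ev : (odd n).
- (* n odd, n.+1 even : MVT on [0, x] *)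
  have [c] := poly_mvt (A n.+1) x0.
  rewrite in_itv /= => /andP [c0 cx].
  rewrite Aeven0 /= ?ev // !subr0 Aderiv hornerM hornerC => E.
  have ic : 0 < c < 2^-1 by rewrite c0 /= (lt_trans cx x1).
  have hs := IH c ic.
  rewrite E uphalf_half ev add1n /= (exprS _ (n./2).+1).
  move: ((-1 : R) ^+ (n./2).+1) ((A n).[c]) hs => s a hs.
  have -> : -1 * s * (-2 * n.+1%:R * a * x) = 2 * n.+1%:R * x * (s * a) by ring.
  by apply: mulr_gt0 => //; apply: mulr_gt0 => //; apply: mulr_gt0.
- (* n even, n.+1 odd : MVT on [x, 1/2] *)
  have [c] := poly_mvt (A n.+1) x1.
  rewrite in_itv /= => /andP [xc c1].
  rewrite Aodd_half /= ?ev // sub0r Aderiv hornerM hornerC => E.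
  have ic : 0 < c < 2^-1 by rewrite c1 andbT (lt_trans x0 xc).
  have hs := IH c ic.
  have -> : (A n.+1).[x] = - (- (A n.+1).[x]) by rewrite opprK.
  rewrite E uphalf_half ev add0n.
  move: ((-1 : R) ^+ (n./2).+1) ((A n).[c]) hs => s a hs.
  have hx : 0 < 2^-1 - x by rewrite subr_gt0.
  have -> : s * - (-2 * n.+1%:R * a * (2^-1 - x)) = 2 * n.+1%:R * (2^-1 - x) * (s * a) by ring.
  by apply: mulr_gt0 => //; apply: mulr_gt0 => //; apply: mulr_gt0.
Qed.

Lemma Asign2 n (x : R) : 2^-1 < x < 1 ->
  0 < (-1) ^+ n * (-1) ^+ (n./2).+1 * (A n).[x].
Proof.
move=> /andP [x1 x2].
have h : 0 < 1 - x < 2^-1.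
  apply/andP; split; first by rewrite subr_gt0.
  have e : (1 : R) = 2^-1 + 2^-1 by field.
  rewrite {1}e; lra.
have := Asign n h.
rewrite Arefl.
by rewrite mulrCA mulrA.
Qed.

End S3.



Section S4.
Variable R : realType.

Definition recp (b : R) n (p : {poly R}) :=
  ((b - n.+1%:R)%:P * 'X - b%:P) * p + ('X * ('X - 1)) * p^`().

Lemma coef_recp b n p k :
  (recp b n p)`_k.+1 = (b - n.+1%:R) * p`_k - b * p`_k.+1
     + k%:R * p`_k - k.+1%:R * p`_k.+1.
Proof.
have -> : recp b n p = (b - n.+1%:R)%:P * ('X * p) - b%:P * p
   + ('X * ('X * p^`()) - 'X * p^`()).
  by rewrite /recp; ring.
rewrite coefD !coefB !coefCM !coefXM.
have h0 : (k.+1 == 0)%N = false by [].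
rewrite h0 !coef_deriv.
case: k h0 => [|k] h0.
  rewrite eqxx mul0r.
  rewrite -[p`_1 *+ 1]mulr_natr /=; ring.
have h1 : (k.+1 == 0)%N = false by [].
rewrite h1 -[p`_k.+1 *+ k.+1]mulr_natr -[p`_k.+2 *+ k.+2]mulr_natr.
change (p`_k.+2.-1) with (p`_k.+1).
ring.
Qed.

Lemma Gsize (b : R) n : b != 1 ->
  size (Gaux b n) = n.+1 /\ (Gaux b n)`_n = - (b - 1) ^+ n.
Proof.
move=> b1.
elim: n => [|n [IHs IHc]].
  rewrite /= size_polyN -polyC1 size_polyC oner_neq0 coefN coefC /= expr0; split=> //.
have Hz : forall j, (n.+1 <= j)%N -> (Gaux b n)`_j = 0.
  by apply/leq_sizeP; rewrite IHs.
have eq : Gaux b n.+1 = recp b n (Gaux b n) by rewrite GauxS.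
have z : (Gaux b n)`_n.+1 = 0.
  by apply: Hz.
have cf : (Gaux b n.+1)`_n.+1 = - (b - 1) ^+ n.+1.
  rewrite eq coef_recp z IHc exprS; ring.
split => //.
apply/eqP; rewrite eqn_leq; apply/andP; split.
  apply/leq_sizeP => j hj.
  case: j hj => // j hj.
  rewrite eq coef_recp.
  have -> : (Gaux b n)`_j = 0 by apply: Hz.
  have -> : (Gaux b n)`_j.+1 = 0 by apply: Hz; lia.
  ring.
rewrite ltnNge; apply/negP => /leq_sizeP H.
have := H n.+1 (leqnn _); rewrite cf => /eqP.
by rewrite oppr_eq0 expf_eq0 subr_eq0 (negbTE b1) andbF.
Qed.

End S4.



Section S5.
Variable R : realType.

Definition PP (s : seq R) : {poly R} := \prod_(z <- s) ('X - z%:P).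

Lemma PP_horner s y : (PP s).[y] = \prod_(z <- s) (y - z).
Proof. by rewrite /PP horner_prod; apply: eq_bigr => z _; rewrite hornerXsubC. Qed.

Lemma sign_prod (s : seq R) y : y \notin s ->
  0 < (-1) ^+ count (fun z => y < z) s * \prod_(z <- s) (y - z).
Proof.
elim: s => [|z s IH]; first by rewrite big_nil expr0 mul1r ltr01.
rewrite in_cons negb_or => /andP [yz ys]; rewrite big_cons /=.
have := IH ys.
move: (\prod_(z <- s) (y - z)) (count (fun z => y < z) s) => p k.
case: (ltrgtP y z) => [lt|gt|e]; last by rewrite e eqxx in yz.
- rewrite add1n exprS => h.
  have -> : -1 * (-1) ^+ k * ((y - z) * p) = (z - y) * ((-1) ^+ k * p) by ring.
  by rewrite mulr_gt0 // subr_gt0.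
- rewrite add0n => h.
  have -> : (-1) ^+ k * ((y - z) * p) = (y - z) * ((-1) ^+ k * p) by ring.
  by rewrite mulr_gt0 // subr_gt0.
Qed.

Fixpoint ilv (a : R) (t xs : seq R) : Prop :=
  match t, xs with
  | [::], [::] => True
  | y :: t', x :: xs' => [/\ a < x, x < y & ilv y t' xs']
  | _, _ => False
  end.

Fixpoint alt (p : {poly R}) (a : R) (t : seq R) : Prop :=
  match t with
  | [::] => True
  | y :: t' => [/\ a < y, p.[a] * p.[y] < 0 & alt p y t']
  end.

Lemma chain p a t : alt p a t -> exists xs, all (root p) xs /\ ilv a t xs.
Proof.
elim: t a => [|y t IH] a /=; first by exists [::].
case=> ay hp ht.
have [x] := poly_ivtoo (ltW ay) hp.
rewrite in_itv /= => /andP [ax xy] rx.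
have [xs [r i]] := IH y ht.
by exists (x :: xs); rewrite /= rx r.
Qed.

Lemma ilv_size a t xs : ilv a t xs -> size xs = size t.
Proof.
elim: t a xs => [|y t IH] a [|x xs] //= [_ _ h].
by rewrite (IH _ _ h).
Qed.

Lemma ilv_path a t xs x0 : ilv a t xs -> x0 <= a -> path <%R x0 xs.
Proof.
elim: t a xs x0 => [|y t IH] a [|x xs] x0 //= [ax xy h] x0a.
rewrite (le_lt_trans x0a ax) /=.
exact: (IH y xs x h (ltW xy)).
Qed.

Lemma ilv_bound a t xs c : ilv a t xs -> all (fun y => y <= c) t ->
  all (fun x => x < c) xs.
Proof.
elim: t a xs => [|y t IH] a [|x xs] //= [ax xy h] /andP [yc tc].
by rewrite (lt_le_trans xy yc) /= (IH y xs h tc).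
Qed.

Lemma ilv_all2 a t xs : ilv a t xs ->
  all2 <%R (belast a t) xs /\ all2 <%R xs t.
Proof.
elim: t a xs => [|y t IH] a [|x xs] //= [ax xy h].
by have [h1 h2] := IH y xs h; rewrite ax xy h1 h2.
Qed.

Lemma count_all2_gt (c : R) (u v : seq R) : all2 <%R u v ->
  (count (fun z => (c < z)%R) u <= count (fun z => (c < z)%R) v)%N.
Proof.
elim: u v => [|x u IH] [|y v] //= /andP [xy h].
apply: leq_add; last exact: IH.
case: (ltrP c x) => // cx.
by rewrite (lt_trans cx xy).
Qed.

Lemma count_all2_lt (c : R) (u v : seq R) : all2 <%R u v ->
  (count (fun z => (z < c)%R) v <= count (fun z => (z < c)%R) u)%N.
Proof.
elim: u v => [|x u IH] [|y v] //= /andP [xy h].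
apply: leq_add; last exact: IH.
case: (ltrP y c) => // yc.
by rewrite (lt_trans xy yc).
Qed.

Lemma count_split (c : R) (s : seq R) : c \notin s ->
  (count (fun z => (c < z)%R) s + count (fun z => (z < c)%R) s = size s)%N.
Proof.
elim: s => [|z s IH] //=; rewrite in_cons negb_or => /andP [cz cs].
rewrite -(IH cs).
case: (ltrgtP c z) => [lt|gt|e]; last by rewrite e eqxx in cz.
all: rewrite /=; lia.
Qed.

Fixpoint alts (p : {poly R}) (c : R) (L : seq R) : Prop :=
  match L with
  | [::] => True
  | y :: L' => 0 < c * (-1) ^+ (size L').+1 * p.[y] /\ alts p c L'
  end.

Lemma alts_alt p c a t : path <%R a t -> alts p c (a :: t) -> alt p a t.
Proof.
elim: t a => [|y t IH] a //= /andP [ay pt] [ha [hy ht]].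
split => //; last by apply: IH.
have e1 : c * (-1) ^+ (size t).+2 = - (c * (-1) ^+ (size t).+1).
  by rewrite (exprS _ (size t).+1); ring.
rewrite e1 in ha.
move: (c * (-1) ^+ (size t).+1) ha hy => w' ha hy.
have h := mulr_gt0 hy ha.
have e : w' * p.[y] * (- w' * p.[a]) = - (w' ^+ 2 * (p.[a] * p.[y])) by ring.
rewrite e in h.
rewrite ltNge; apply/negP => H.
have := mulr_ge0 (sqr_ge0 w') H.
lra.
Qed.

Lemma parity (i j : nat) (x : R) : 0 < (-1) ^+ i * x -> 0 < (-1) ^+ j * x ->
  odd i = odd j.
Proof.
rewrite -(signr_odd _ i) -(signr_odd _ j).
case: (odd i); case: (odd j) => //=; rewrite ?expr1 ?expr0 => h1 h2; lra.
Qed.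

End S5.



Section S6.
Variable R : realType.

Lemma PP_split (s1 s2 : seq R) y :
  PP (s1 ++ y :: s2) = ('X - y%:P) * PP (s1 ++ s2).
Proof. rewrite /PP !big_cat big_cons /=; ring. Qed.

Lemma deriv_at_root (lc : R) (s1 s2 : seq R) y :
  (lc *: PP (s1 ++ y :: s2))^`().[y] = lc * \prod_(z <- s1 ++ s2) (y - z).
Proof.
rewrite PP_split derivZ derivM derivXsubC mul1r hornerZ hornerD hornerM
  hornerXsubC subrr mul0r addr0 PP_horner //.
Qed.

Lemma G1_at0 (b : R) n : (Gaux b n.+1).[0] = - b * (Gaux b n).[0].
Proof.
rewrite GauxS !hornerE /=; ring.
Qed.

Lemma G1_atroot (b : R) n y : (Gaux b n).[y] = 0 ->
  (Gaux b n.+1).[y] = y * (y - 1) * (Gaux b n)^`().[y].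
Proof.
move=> h; rewrite GauxS hornerD !hornerM h mulr0 add0r.
by rewrite !hornerE.
Qed.


Lemma alts_G1 (b : R) n (s : seq R) lc : 0 < b -> lc != 0 -> sorted <%R s ->
  all (fun z => z < 0) s -> Gaux b n = lc *: PP s ->
  alts (Gaux b n.+1) lc (rcons s 0).
Proof.
move=> b0 lc0 ss sn Gn.
have pw : pairwise <%R s by rewrite -sorted_pairwise //; exact: lt_trans.
have lc2 : 0 < lc ^+ 2 by rewrite exprn_even_gt0 //= lc0 orbT.
suff H : forall s2 s1, s = s1 ++ s2 -> alts (Gaux b n.+1) lc (rcons s2 0).
  exact: (H s [::]).
elim => [|y s2 IH] s1 Es.
  split => //.
  rewrite G1_at0 Gn hornerZ PP_horner /= expr1.
  have n0 : (0 : R) \notin s.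
    by apply/negP => /(allP sn); rewrite ltxx.
  have := sign_prod n0.
  have -> : count (fun z => 0 < z) s = 0%N.
    rewrite (@eq_in_count _ _ pred0) ?count_pred0 // => z /(allP sn) /= z0.
    by rewrite ltNge (ltW z0).
  rewrite expr0 mul1r.
  move: (\prod_(z <- s) (0 - z)) => P hP.
  have -> : lc * -1 * (- b * (lc * P)) = b * (lc ^+ 2) * P by ring.
  by apply: mulr_gt0 => //; apply: mulr_gt0.
split; last by apply: (IH (rcons s1 y)); rewrite Es cat_rcons.
move: pw; rewrite Es pairwise_cat pairwise_cons allrel_consr.
case/and3P => /andP [s1y _] _ /andP [ys2 _].
have yin : y \in s by rewrite Es mem_cat in_cons eqxx orbT.
have yn : (Gaux b n).[y] = 0.
  have : root (PP s) y by rewrite /PP root_prod_XsubC.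
  by rewrite Gn hornerZ /root => /eqP ->; rewrite mulr0.
have y0 : y < 0 by apply: (allP sn).
rewrite G1_atroot // Gn Es deriv_at_root.
have ny : y \notin s1 ++ s2.
  rewrite mem_cat negb_or; apply/andP; split; apply/negP.
    by move=> /(allP s1y); rewrite ltxx.
  by move=> /(allP ys2); rewrite ltxx.
have := sign_prod ny.
have -> : count (fun z => y < z) (s1 ++ s2) = size s2.
  rewrite count_cat.
  rewrite (@eq_in_count _ _ pred0 s1) ?count_pred0; last first.
    by move=> z /(allP s1y) /= zy; rewrite ltNge (ltW zy).
  by rewrite (@eq_in_count _ _ predT s2) ?count_predT // => z /(allP ys2).
rewrite size_rcons !exprS.
move: (\prod_(z <- s1 ++ s2) (y - z)) ((-1) ^+ size s2) => P e hP.
have -> : lc * (-1 * (-1 * e)) * (y * (y - 1) * (lc * P)) =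
  lc ^+ 2 * (y * (y - 1)) * (e * P) by ring.
have yy : 0 < y * (y - 1) by nra.
by apply: mulr_gt0 => //; apply: mulr_gt0.
Qed.


Lemma roots_ind (b : R) : 0 < b < 1 -> forall n, exists s : seq R,
  [/\ sorted <%R s, size s = n, all (fun z => z < 0) s,
      Gaux b n = (- (b - 1) ^+ n) *: PP s &
      b != 2^-1 -> (-1 : R) \notin s /\
        count (fun z => -1 < z) s = (if b < 2^-1 then n.+1./2 else n./2)].
Proof.
move=> /andP [b0 b1]; have b1' : b != 1 by rewrite lt_eqF.
elim => [|n [s [ss sz sn Gn cnt]]].
  exists [::]; split => //.
    by rewrite /PP big_nil /= expr0 scaleN1r.
  by move=> _; split => //; case: ifP.
set lc := - (b - 1) ^+ n.
have lc0 : lc != 0 by rewrite /lc oppr_eq0 expf_eq0 subr_eq0 (negbTE b1') andbF.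
have al := alts_G1 b0 lc0 ss sn Gn.
have sr : sorted <%R (rcons s 0).
  case: s ss sn {Gn cnt sz al} => [|x p] // ss sn.
  rewrite rcons_cons /= rcons_path; apply/andP; split; first exact: ss.
  apply: (allP sn); exact: mem_last.
have sle : all (fun z => z <= 0) (rcons s 0).
  rewrite all_rcons lexx /=; apply/allP => z /(allP sn) /ltW //.
case Ert: (rcons s 0) => [|a t].
  by move: (f_equal size Ert); rewrite size_rcons.
rewrite Ert in al sr sle.
have pat : path <%R a t by [].
have [xs [rxs ilvx]] := chain (alts_alt pat al).
have st : size t = n by move: (f_equal size Ert); rewrite size_rcons sz => -[].
have sxs : size xs = n by rewrite (ilv_size ilvx).
have pax : path <%R a xs := ilv_path ilvx (lexx a).
have uxs : uniq xs.
  by have := path_sorted pax; rewrite lt_sorted_uniq_le => /andP [].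
have ur : poly.uniq_roots xs by rewrite poly.uniq_rootsE.
have [q Gq] := uniq_roots_prod_XsubC rxs ur.
have [Gs Gc] := Gsize n.+1 b1'.
have q0 : q != 0.
  by apply/negP => /eqP q0; move: Gs; rewrite Gq q0 mul0r size_poly0.
have sq : (size q = 2)%N.
  move: Gs; rewrite Gq size_Mmonic ?monic_prod_XsubC // size_prod_XsubC sxs.
  move=> H; clear -H; rewrite addnS /= in H; set k := size q in H *; lia.
have [x0 rx0] := poly2_root sq.
have /factor_theorem [q1 Eq] := rx0.
have q10 : q1 != 0 by apply/negP => /eqP q10; move: q0; rewrite Eq q10 mul0r eqxx.
have sq1 : (size q1 <= 1)%N.
  move: sq; rewrite Eq size_Mmonic ?monicXsubC // size_XsubC => H; clear -H; rewrite addnS /= in H; set k := size q1 in H *; lia.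
set c := q1`_0.
have G1E : Gaux b n.+1 = c *: PP (x0 :: xs).
  by rewrite Gq Eq (size1_polyC sq1) /PP big_cons -mul_polyC mulrA.
have cE : c = - (b - 1) ^+ n.+1.
  rewrite -Gc G1E coefZ.
  have : lead_coef (PP (x0 :: xs)) = 1 by apply/monicP; apply: monic_prod_XsubC.
  by rewrite lead_coefE /PP size_prod_XsubC /= sxs => ->; rewrite mulr1.
rewrite cE in G1E.
set lc' := - (b - 1) ^+ n.+1 in G1E.
have axs : all (fun z => a < z) xs by apply: order_path_min => //; exact: lt_trans.
have nax : a \notin xs by apply/negP => /(allP axs); rewrite ltxx.
have hP := sign_prod nax.
have cnta : count (fun z => a < z) xs = n.
  by rewrite (@eq_in_count _ _ predT xs) ?count_predT // => z /(allP axs).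
rewrite cnta in hP.
have x0a : x0 < a.
  case: al => ha _.
  rewrite G1E hornerZ PP_horner big_cons st in ha.
  move: ha hP; rewrite /lc /lc' !exprS.
  move: (\prod_(z <- xs) (a - z)) ((-1 : R) ^+ n) => P sg ha hP.
  have e0 : (b - 1) ^+ n != 0 by rewrite expf_eq0 subr_eq0 (negbTE b1') andbF.
  move: ((b - 1) ^+ n) e0 ha => e e0 ha.
  have E : - e * (-1 * sg) * (- ((b - 1) * e) * ((a - x0) * P)) =
     ((1 - b) * e ^+ 2 * (sg * P)) * (a - x0) by ring.
  rewrite E in ha.
  have K : 0 < (1 - b) * e ^+ 2 * (sg * P).
    apply: mulr_gt0 => //; apply: mulr_gt0; first by rewrite subr_gt0.
    by rewrite exprn_even_gt0 //= e0 orbT.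
  by rewrite pmulr_rgt0 // subr_gt0 in ha.
have a0 : a <= 0 by move: sle => /= /andP [].
exists (x0 :: xs); split.
- by rewrite /= (ilv_path ilvx (ltW x0a)).
- by rewrite /= sxs.
- rewrite /= (lt_le_trans x0a a0) /=.
  by apply: (ilv_bound ilvx); move: sle => /= /andP [].
- exact: G1E.
move=> bh.
have [nin cnt0] := cnt bh.
pose k := if b < 2^-1 then ((n.+1)./2).+1 else (n.+1 + ((n.+1)./2).+1)%N.
have hk : 0 < (-1) ^+ k * (Gaux b n.+1).[-1].
  rewrite -ApolE /k; case: ifP => hb.
    by apply: Asign; rewrite b0 hb.
  have hb' : 2^-1 < b by rewrite lt_neqAle eq_sym bh /= leNgt hb.
  by rewrite exprD; apply: Asign2; rewrite hb' b1.
have G1v : (Gaux b n.+1).[-1] = lc' * \prod_(z <- x0 :: xs) (-1 - z).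
  by rewrite G1E hornerZ PP_horner.
have nin' : (-1 : R) \notin x0 :: xs.
  apply/negP => hin.
  have : root (PP (x0 :: xs)) (-1) by rewrite /PP root_prod_XsubC.
  rewrite /root PP_horner => /eqP h0.
  by move: hk; rewrite G1v h0 mulr0 mulr0 ltxx.
have Es : belast a t = s.
  by have := lastI a t; rewrite -Ert => /rcons_inj [<-].
have [A1 A2] := ilv_all2 ilvx.
rewrite Es in A1.
have lo := count_all2_gt (-1) A1.
have A3 : all2 <%R (x0 :: xs) (a :: t) by rewrite /= x0a A2.
have up := count_all2_lt (-1) A3.
rewrite -Ert -cats1 count_cat /= in up.
have sp1 := count_split nin'.
have sp0 := count_split nin.
have hs := sign_prod nin'.
have lcpos : 0 < (-1) ^+ n * lc'.
  rewrite /lc' exprS.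
  have -> : (-1) ^+ n * - ((b - 1) * (b - 1) ^+ n) = (1 - b) * ((-1) * (b - 1)) ^+ n.
    by rewrite exprMn; ring.
  rewrite mulN1r opprB mulr_gt0 // ?exprn_gt0 // subr_gt0 //.
have hp : 0 < (-1) ^+ (n + count (fun z => -1 < z) (x0 :: xs)) * (Gaux b n.+1).[-1].
  rewrite G1v exprD.
  have := mulr_gt0 lcpos hs.
  set u := (-1 : R) ^+ n; set v := (-1 : R) ^+ count _ _.
  set p := \prod_(z <- x0 :: xs) (-1 - z).
  by have -> : u * v * (lc' * p) = u * lc' * (v * p) by ring.
have par := parity hp hk.
move: lo up sp1 sp0 par cnt0.
rewrite /k /=.
have f : ((0 : R) < -1) = false by apply/negbTE; rewrite -leNgt lerN10.
rewrite f sxs sz.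
set dx := count _ xs.
move: (-1 < x0) (x0 < -1) => p1 p2.
move=> H1 H2 H3 H4 H5 H6; split => //.
move: H5 H6; case: ifP => _ H5 H6; clear -H1 H2 H3 H4 H5 H6; rewrite ?uphalf_half in H5 H6 *;
  set c := count (fun z => -1 < z) s in H1 H4 H6 *; set d := count (fun z => z < -1) s in H2 H4 *;
  set e := count (fun z => z < -1) xs in H2 H3 *; clearbody dx c d e; lia.
Qed.

End S6.



Section S7.
Variable R : realType.
Local Notation toC := (real_complex R).

Lemma GC_fact (b : R) n (lc : R) (s : seq R) :
  Gaux b n = lc *: PP s ->
  map_poly toC (Gaux b n) = toC lc *: \prod_(w <- map toC s) ('X - w%:P).
Proof.
move=> ->; rewrite map_polyZ /PP rmorph_prod big_map.
congr (_ *: _); apply: eq_bigr => z _; exact: map_polyXsubC.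
Qed.

Lemma normC_real (x : R) : `|toC x| = toC `|x|.
Proof.
by rewrite normc_def /= expr0n /= addr0 sqrtr_sqr.
Qed.

Lemma ltC1 (x : R) : (toC x < 1) = (x < 1).
Proof. by rewrite -ltcR. Qed.

Lemma gtC1 (x : R) : (1 < toC x) = (1 < x).
Proof. by rewrite -ltcR. Qed.


Lemma nz_of (p : {poly R[i]}) (s : seq R) (P : pred R) (Q : pred R[i]) k :
  uniq s -> (forall z, root p z = (z \in map toC s)) ->
  {in s, forall x, Q (toC x) = P x} -> count P s = k -> nzeros p Q k.
Proof.
move=> us hr hQ hc; exists (map toC (filter P s)); split.
- rewrite map_inj_uniq ?filter_uniq //; exact: complexI.
- move=> z; rewrite hr; apply/idP/idP.
    case/mapP => x; rewrite mem_filter => /andP [Px xs] ->.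
    by rewrite map_f //= hQ.
  case/andP => /mapP [x xs ->] Qz; apply: map_f.
  by rewrite mem_filter -hQ // Qz.
- by rewrite size_map size_filter.
Qed.

Lemma uniq_notin (s1 s2 : seq R) x : uniq (s1 ++ x :: s2) -> x \notin s1 ++ s2.
Proof.
rewrite uniq_catC /= !mem_cat !negb_or => /andP [/andP [h1 h2] _].
by rewrite h1 h2.
Qed.

End S7.


Unset Implicit Arguments.

Theorem theorem4p7 (R : realType) (m : nat) (hm : (2 <= m)%N) :
  (* (i) *)
  (forall b : R, 0 < b < 1 ->
     forall z : R[i], root (GC m b) z ->
       ~~ root (GC m b)^`() z /\ exists x : R, x < 0 /\ z = real_complex R x)
  /\
  (* (ii) *)
  (forall b : R, 0 < b < 2^-1 ->
     nzeros (GC m b) (fun z => `|z| < 1) m./2 /\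
     nzeros (GC m b) (fun z => `|z| > 1) m.-1./2)
  /\
  (* (iii) *)
  (forall b : R, 2^-1 < b < 1 ->
     nzeros (GC m b) (fun z => `|z| < 1) m.-1./2 /\
     nzeros (GC m b) (fun z => `|z| > 1) m./2).
Proof.
have key : forall b : R, 0 < b < 1 -> exists s : seq R,
  [/\ uniq s /\ size s = m.-1, all (fun z => z < 0) s,
      Gaux b m.-1 = (- (b - 1) ^+ m.-1) *: PP s,
      forall z, root (GC m b) z = (z \in map (real_complex R) s) &
      b != 2^-1 -> (-1 : R) \notin s /\
        count (fun z => -1 < z) s = (if b < 2^-1 then m./2 else m.-1./2)].
  move=> b hb; have [s [ss sz sn Gn cnt]] := roots_ind hb m.-1.
  have b1' : b != 1 by case/andP: hb => _ b1; rewrite lt_eqF.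
  exists s; split => //.
  - split => //; by move: ss; rewrite lt_sorted_uniq_le => /andP [].
  - move=> z; rewrite /GC /G (GC_fact Gn) rootZ ?root_prod_XsubC //.
    rewrite fmorph_eq0 oppr_eq0 expf_eq0 subr_eq0 (negbTE b1') andbF //.
  - by move=> bh; have [h1 h2] := cnt bh; split => //; rewrite h2 prednK // ltnW.
split; [|split].
- move=> b hb z rz.
  have [s [[us _] sn Gn hr _]] := key b hb.
  move: rz; rewrite hr => /mapP [x xs ->].
  split; last by exists x; split => //; apply: (allP sn).
  rewrite /GC /G deriv_map /root horner_map fmorph_eq0.
  have b1' : b != 1 by case/andP: hb => _ b1; rewrite lt_eqF.
  case/splitPr: xs us Gn => s1 s2 us Gn.
  rewrite Gn deriv_at_root mulf_eq0 oppr_eq0 expf_eq0 subr_eq0 (negbTE b1') andbF /=.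
  have := sign_prod (uniq_notin us).
  by apply: contraTN => /eqP ->; rewrite mulr0 ltxx.
- move=> b /andP [b0 bh].
  have hb : 0 < b < 1 by rewrite b0 /= (lt_trans bh) // invf_lt1 // ltr1n.
  have [s [[us sz] sn Gn hr hc]] := key b hb.
  have [nin cnt] := hc (negbT (lt_eqF bh)).
  rewrite bh in cnt.
  have sp := count_split nin.
  split.
    apply: (nz_of us hr) cnt => x xs.
    have x0 : x < 0 := allP sn x xs.
    by rewrite normC_real ltC1 ltr0_norm // ltrNl.
  apply: (nz_of (P := fun z => z < -1) us hr).
    move=> x xs; have x0 : x < 0 := allP sn x xs.
    by rewrite normC_real gtC1 ltr0_norm // ltrNr.
  move: sp; rewrite cnt sz.
  move: (count _ s) => d; clear -hm; move=> H; lia.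
- move=> b /andP [bh b1].
  have hb : 0 < b < 1.
    by rewrite b1 andbT (lt_trans _ bh) // invr_gt0 ltr0n.
  have [s [[us sz] sn Gn hr hc]] := key b hb.
  have [nin cnt] := hc (negbT (gt_eqF bh)).
  rewrite ltNge (ltW bh) /= in cnt.
  have sp := count_split nin.
  split.
    apply: (nz_of us hr) cnt => x xs.
    have x0 : x < 0 := allP sn x xs.
    by rewrite normC_real ltC1 ltr0_norm // ltrNl.
  apply: (nz_of (P := fun z => z < -1) us hr).
    move=> x xs; have x0 : x < 0 := allP sn x xs.
    by rewrite normC_real gtC1 ltr0_norm // ltrNr.
  move: sp; rewrite cnt sz.
  move: (count _ s) => d; clear -hm; move=> H; lia.
Qed.
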